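(* Under the Median Stationing (MS) algorithm, the coverage costs $T_{\mathrm{MS}}^{\mathrm{DI}}$ and $T_{\mathrm{MS}}^{\mathrm{DD}}$ of a team of $m$ DI, resp. DD, robots in a square $\mathcal{Q}$ of area $\mathcal{A}$ satisfy $$\frac{\mathcal{H}^*_m(\mathcal{Q})}{v_{\max}}\le T_{\mathrm{MS}}^{\mathrm{DI}}\le \frac{\mathcal{H}^*_m(\mathcal{Q})}{v_{\max}}+\frac{v_{\max}}{2u_{\max}}+\sqrt{\frac{2\sqrt{2\mathcal{A}}}{u_{\max}}},$$ $$\frac{\mathcal{H}^*_m(\mathcal{Q})}{w_{\max}}\le T_{\mathrm{MS}}^{\mathrm{DD}}\le \frac{\mathcal{H}^*_m(\mathcal{Q})}{w_{\max}}+\frac{\rho\pi}{2w_{\max}}.$$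
   Context: Environment: $\mathcal{Q}\subset\mathbb{R}^2$ is a square of area $\mathcal{A}$. Service requests are generated by a spatio-temporal Poisson process with time intensity $\lambda>0$ and uniform spatial density on $\mathcal{Q}$; a request is fulfilled when one of $m$ identical robots moves to its location. For a policy $\pi$, if $T_j$ is the time between generation of the $j$-th request and its fulfillment, the coverage cost is $T_\pi=\lim_{j\to+\infty}\lim_{\lambda\to0^+}\mathrm{E}[T_j]$. Double integrator (DI) robot: state $(x,y,v_x,v_y)\in\mathbb{R}^4$ with $\dot x=v_x$, $\dot y=v_y$, $\dot v_x=u_x$, $\dot v_y=u_y$, $v_x^2+v_y^2\le v_{\max}^2$, $u_x^2+u_y^2\le u_{\max}^2$. Differential drive (DD) robot: state $(x,y,\theta)\in SE(2)$ with $\dot x=\tfrac12(w_l+w_r)\cos\theta$, $\dot y=\tfrac12(w_l+w_r)\sin\theta$, $\dot\theta=\tfrac{1}{2\rho}(w_r-w_l)$, $|w_l|,|w_r|\le w_{\max}$, $\rho>0$. Continuous $m$-median: $\mathcal{H}_m(p,\mathcal{Q})=\frac{1}{\mathcal{A}}\int_{\mathcal{Q}}\min_i\|p_i-q\|\,dq$ for $p\in\mathcal{Q}^m$; $\mathcal{H}^*_m(\mathcal{Q})$ is its global minimum and a minimizer $p^*=(p_1^*,\dots,p_m^* )$ gives the $m$-median locations. Median Stationing (MS) algorithm: the $m$ robots are placed at rest at the $m$-median locations $p_1^*,\dots,p_m^*$ (their stationary locations); for DD robots the heading is arbitrary. When a request appears, it is assigned to the robot whose stationary location is closest to the request location; that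 robot travels to the request location along a minimum-time path (with no terminal constraint other than position), and, in the absence of outstanding requests, returns to its stationary location (at rest, for DI robots). *)

(* Defs.v *)
From HB Require Import structures.
From mathcomp Require Import all_boot all_order all_algebra.
From mathcomp Require Import all_classical all_reals all_analysis.
Set Implicit Arguments. Unset Strict Implicit. Unset Printing Implicit Defensive.
Import Order.TTheory GRing.Theory Num.Theory.
Import numFieldNormedType.Exports.
Local Open Scope classical_set_scope.
Local Open Scope ring_scope.

Section Defs.
Variable R : realType.

Definition pt := (R * R)%type.

Definition dist (p q : pt) : R :=
  Num.sqrt ((p.1 - q.1) ^+ 2 + (p.2 - q.2) ^+ 2).

Definition square (a b s : R) : set pt :=
  [set q | a <= q.1 <= a + s /\ b <= q.2 <= b + s].

Definition leb := (@lebesgue_measure R).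

Definition leb2 := (leb \x leb)%E.

Definition int0 (t : R) (f : R -> R) : R :=
  Rintegral leb [set s | 0 <= s <= t] f.

(* A double-integrator robot starting at rest at p can be at position q at
   time T >= 0: there are measurable controls (ux, uy) with |u| <= umax, the
   velocity v(t) = int_0^t u satisfies |v| <= vmax on [0, T], and the
   position p + int_0^T v equals q. *)
Definition DI_reach (vmax umax : R) (p q : pt) (T : R) : Prop :=
  0 <= T /\
  exists ux uy : R -> R,
    measurable_fun setT ux /\ measurable_fun setT uy /\
    (forall t, 0 <= t <= T -> ux t ^+ 2 + uy t ^+ 2 <= umax ^+ 2) /\
    (forall t, 0 <= t <= T ->
        (int0 t ux) ^+ 2 + (int0 t uy) ^+ 2 <= vmax ^+ 2) /\
    p.1 + int0 T (fun t => int0 t ux) = q.1 /\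
    p.2 + int0 T (fun t => int0 t uy) = q.2.

Definition DI_time (vmax umax : R) (p q : pt) : \bar R :=
  ereal_inf [set T%:E | T in DI_reach vmax umax p q].

Definition DD_reach (wmax rho : R) (p : pt) (theta0 : R) (q : pt) (T : R)
    : Prop :=
  0 <= T /\
  exists wl wr : R -> R,
    measurable_fun setT wl /\ measurable_fun setT wr /\
    (forall t, 0 <= t <= T -> `|wl t| <= wmax /\ `|wr t| <= wmax) /\
    let theta t := theta0 + int0 t (fun s => (wr s - wl s) / (2 * rho)) in
    p.1 + int0 T (fun t => (wl t + wr t) / 2 * cos (theta t)) = q.1 /\
    p.2 + int0 T (fun t => (wl t + wr t) / 2 * sin (theta t)) = q.2.

Definition DD_time (wmax rho : R) (p : pt) (theta0 : R) (q : pt) : \bar R :=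
  ereal_inf [set T%:E | T in DD_reach wmax rho p theta0 q].

Definition closest (m : nat) (ps : 'I_m -> pt) (q : pt) (i : 'I_m) : bool :=
  [forall j, dist (ps i) q <= dist (ps j) q].

Definition Hm (m : nat) (Q : set pt) (A : R) (ps : 'I_m -> pt) : \bar R :=
  ((A^-1)%:E * \int[leb2]_(q in Q) (\big[Order.min/+oo%E]_(i < m) (dist (ps i) q)%:E))%E.

Definition Hstar (m : nat) (Q : set pt) (A : R) : \bar R :=
  ereal_inf [set Hm Q A ps | ps in [set ps : 'I_m -> pt | forall i, Q (ps i)]].

Definition is_median (m : nat) (Q : set pt) (A : R) (ps : 'I_m -> pt) : Prop :=
  (forall i, Q (ps i)) /\
  (forall ps' : 'I_m -> pt, (forall i, Q (ps' i)) -> (Hm Q A ps <= Hm Q A ps')%E).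

(* Light-load coverage cost of Median Stationing: all robots are at their
   stationary states when a request q (uniform on Q) arrives; it is served by
   the robot with closest stationary location, along a minimum-time path
   with travel time tau i q.  (Ties, a null set, resolved by the minimum.) *)
Definition MS_cost (m : nat) (Q : set pt) (A : R) (ps : 'I_m -> pt)
    (tau : 'I_m -> pt -> \bar R) : \bar R :=
  ((A^-1)%:E * \int[leb2]_(q in Q)
      (\big[Order.min/+oo%E]_(i < m | closest ps q i) tau i q))%E.

End Defs.

(* Main.v *)
Require Import Defs.
From HB Require Import structures.
From mathcomp Require Import all_boot all_order all_algebra.
From mathcomp Require Import all_classical all_reals all_analysis.
From mathcomp Require Import measurable_realfun.
From mathcomp Require Import lra ring.
Import Order.TTheory GRing.Theory Num.Theory.
Import numFieldNormedType.Exports.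
Set Implicit Arguments. Unset Strict Implicit. Unset Printing Implicit Defensive.
Local Open Scope classical_set_scope.
Local Open Scope ring_scope.
Section One.
Variable R : realType.
Notation mu := (@lebesgue_measure R).

Lemma int0E (t : R) f : int0 t f = \int[mu]_(s in `[0, t]) f s.
Proof.
rewrite /int0 /leb; congr Rintegral; apply/seteqP; split => x /=; rewrite in_itv //=.
Qed.

Lemma intb (a b M : R) (f : R -> R) : measurable_fun `[a, b] f ->
  (forall x, a <= x <= b -> `|f x| <= M) -> mu.-integrable `[a, b] (EFin \o f).
Proof.
move=> mf fM; apply: measurable_bounded_integrable => //.
- change (lebesgue_measure (`[a, b]%classic : set R) < +oo)%E.
  by rewrite lebesgue_measure_itv; case: ifP => _; rewrite ?ltry.
- exists M; split; first exact: num_real.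
  move=> N MN x /= xab; apply: le_trans (fM x _) (ltW MN).
  by move: xab; rewrite in_itv.
Qed.

Lemma Rint_oc (a b c : R) : a <= b -> \int[mu]_(s in `]a, b]) c = c * (b - a).
Proof.
move=> ab; rewrite Rintegral_cst//= (lebesgue_measure_itv `]a, b])/= lte_fin.
by case: ifP => [//|]; move: ab; rewrite le_eqVlt => /predU1P[->|->//]; rewrite subrr mulr0.
Qed.

Lemma Rint_cc (a b c : R) : a <= b -> \int[mu]_(s in `[a, b]) c = c * (b - a).
Proof.
move=> ab; rewrite Rintegral_cst//= (lebesgue_measure_itv `[a, b])/= lte_fin.
by case: ifP => [//|]; move: ab; rewrite le_eqVlt => /predU1P[->|->//]; rewrite subrr mulr0.
Qed.

Lemma split_int (t1 t : R) f : 0 <= t1 <= t -> mu.-integrable `[0, t] (EFin \o f) ->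
  \int[mu]_(s in `[0, t]) f s = \int[mu]_(s in `[0, t1]) f s + \int[mu]_(s in `]t1, t]) f s.
Proof.
move=> /andP[t10 t1t] fi.
have E : `[0, t]%classic = `[0, t1]%classic `|` `]t1, t]%classic :> set R.
  by apply: itv_bndbnd_setU; rewrite bnd_simp.
rewrite E Rintegral_setU//; first by rewrite -E.
apply/disj_setPS => x [/=]; rewrite !in_itv/= => /andP[_ xt1] /andP[t1x _].
by move: (lt_le_trans t1x xt1); rewrite ltxx.
Qed.

Lemma mpw (t1 : R) (g h : R -> R) : measurable_fun setT g -> measurable_fun setT h ->
  measurable_fun setT (fun s : R => if s <= t1 then g s else h s).
Proof.
move=> mg mh; apply: measurable_fun_ifT => //.
exact: measurable_fun_ler.
Qed.

Lemma int0_pw (A B t1 t : R) : 0 <= t1 <= t ->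
  int0 t (fun s => if s <= t1 then A else B) = A * t1 + B * (t - t1).
Proof.
move=> /andP[t10 t1t]; rewrite int0E (@split_int t1); last first.
- apply: (@intb _ _ (`|A| + `|B|)).
    by apply: measurable_funS (mpw _ (measurable_cst _) (measurable_cst _)).
  by move=> x _; case: ifP => _; rewrite ?lerDl ?lerDr.
- by rewrite t10.
have -> : \int[mu]_(s in `]t1, t]) (if s <= t1 then A else B) = \int[mu]_(s in `]t1, t]) B.
  by apply: eq_Rintegral => x; rewrite inE /= in_itv /= => /andP[x1 _]; rewrite leNgt x1.
have -> : \int[mu]_(s in `[0, t1]) (if s <= t1 then A else B) = \int[mu]_(s in `[0, t1]) A.
  by apply: eq_Rintegral => x; rewrite inE /= in_itv /= => /andP[_ ->].
by rewrite Rint_cc// Rint_oc// subr0.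
Qed.

Lemma int0_pw_le (A B t1 t : R) : 0 <= t <= t1 ->
  int0 t (fun s => if s <= t1 then A else B) = A * t.
Proof.
move=> /andP[t0 tt1]; rewrite int0E.
have -> : \int[mu]_(s in `[0, t]) (if s <= t1 then A else B) = \int[mu]_(s in `[0, t]) A.
  by apply: eq_Rintegral => x; rewrite inE /= in_itv /= => /andP[_ xt]; rewrite (le_trans xt tt1).
by rewrite Rint_cc// subr0.
Qed.
Lemma int_lin (c tau : R) : 0 < tau -> \int[mu]_(s in `[0, tau]) (c * s) = c * tau ^+ 2 / 2.
Proof.
move=> t0.
rewrite /Rintegral (@continuous_FTC2 _ _ (fun x => c * x ^+ 2 / 2))//=.
- by rewrite expr0n /= mulr0 mul0r subr0.
- by apply: continuous_in_subspaceT => x _; exact: mulrl_continuous.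
- split.
  + move=> x _; apply: derivableM => //; apply: derivableM => //; exact: exprn_derivable.
  + apply: cvg_at_right_filter; apply: cvgM; [apply: cvgM; [exact: cvg_cst|]|exact: cvg_cst].
    exact: exprn_continuous.
  + apply: cvg_at_left_filter; apply: cvgM; [apply: cvgM; [exact: cvg_cst|]|exact: cvg_cst].
    exact: exprn_continuous.
- move=> x _; rewrite derive1Mr; last by apply: derivableM => //; exact: exprn_derivable.
  rewrite derive1Ml; last exact: exprn_derivable.
  rewrite exp_derive1 /= expr1 -[2 *: x]/(2 * x).
  by rewrite mulrCA mulrAC divff ?mul1r// pnatr_eq0.
Qed.
Lemma cs (X Y a b N M : R) : 0 <= N -> 0 <= M -> N ^+ 2 = X ^+ 2 + Y ^+ 2 -> a ^+ 2 + b ^+ 2 <= M ^+ 2 ->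
  X * a + Y * b <= N * M.
Proof.
move=> N0 M0 NE ab.
have h1 : (X * a + Y * b) ^+ 2 <= (N * M) ^+ 2.
  have := sqr_ge0 (X * b - Y * a). nra.
have h2 : 0 <= N * M by nra.
nra.
Qed.
Lemma sq3 (N P : R) : 0 <= N -> 0 <= P -> N ^+ 2 <= N * P -> N ^+ 2 <= P ^+ 2.
Proof. nra. Qed.
Lemma ab1 (x M : R) : 0 <= M -> x ^+ 2 <= M ^+ 2 -> `|x| <= M.
Proof. move=> M0 h; rewrite ler_norml; apply/andP; split; nra. Qed.

Lemma vec_bound (T M : R) (fx fy : R -> R) : 0 <= T -> 0 <= M ->
  measurable_fun `[0, T] fx -> measurable_fun `[0, T] fy ->
  (forall t, 0 <= t <= T -> fx t ^+ 2 + fy t ^+ 2 <= M ^+ 2) ->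
  (int0 T fx) ^+ 2 + (int0 T fy) ^+ 2 <= (M * T) ^+ 2.
Proof.
move=> T0 M0 mx my hb.
rewrite !int0E.
set X := \int[mu]_(s in `[0, T]) fx s; set Y := \int[mu]_(s in `[0, T]) fy s.
set N := Num.sqrt (X ^+ 2 + Y ^+ 2).
have N0 : 0 <= N := sqrtr_ge0 _.
have NE : N ^+ 2 = X ^+ 2 + Y ^+ 2 by rewrite sqr_sqrtr// addr_ge0// sqr_ge0.
have ix : mu.-integrable `[0, T] (EFin \o fx).
  apply: (intb (M := M)) => // t /hb h; apply: ab1 => //; nra.
have iy : mu.-integrable `[0, T] (EFin \o fy).
  apply: (intb (M := M)) => // t /hb h; apply: ab1 => //; nra.
have ixy : mu.-integrable `[0, T] (EFin \o (fun s => X * fx s + Y * fy s)).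
  apply: (intb (M := N * M)).
    apply: measurable_funD; apply: measurable_funM => //; exact: measurable_cst.
  move=> t /hb h; rewrite ler_norml; apply/andP; split.
    have := cs (X := - X) (Y := - Y) N0 M0 _ h; rewrite !sqrrN => /(_ NE).
    rewrite !mulNr -opprD => h'; rewrite lerNl; exact: h'.
  exact: cs.
have key : N ^+ 2 <= N * (M * T).
  rewrite NE.
  have -> : X ^+ 2 + Y ^+ 2 = \int[mu]_(s in `[0, T]) (X * fx s + Y * fy s).
    rewrite RintegralD//; last 2 first.
    - apply: (intb (M := `|X| * M)).
        by apply: measurable_funM => //; exact: measurable_cst.
      move=> t /hb h; rewrite normrM ler_wpM2l//; apply: ab1 => //; nra.
    - apply: (intb (M := `|Y| * M)).
        by apply: measurable_funM => //; exact: measurable_cst.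
      move=> t /hb h; rewrite normrM ler_wpM2l//; apply: ab1 => //; nra.
    by rewrite !RintegralZl// !expr2.
  have -> : N * (M * T) = \int[mu]_(s in `[0, T]) (N * M) by rewrite Rint_cc// subr0 mulrA.
  apply: le_Rintegral => //.
  - exact: (intb (M := `|N * M|)) => // t _.
  - move=> t; rewrite /= in_itv /= => /hb h; exact: cs.
rewrite -NE; apply: sq3 => //; exact: mulr_ge0.
Qed.

Lemma mint0 (T : R) (f : R -> R) : 0 <= T -> mu.-integrable `[0, T] (EFin \o f) ->
  measurable_fun `[0, T] (fun t => int0 t f).
Proof.
move=> T0 fi.
have -> : (fun t => int0 t f) = (fun t => parameterized_integral mu 0 t f).
  by apply: funext => t; rewrite int0E.
apply: subspace_continuous_measurable_fun; first exact: measurable_itv.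
exact: parameterized_integral_continuous.
Qed.

Lemma dist_le (p q : pt R) (X Y D : R) : 0 <= D -> q.1 = p.1 + X -> q.2 = p.2 + Y ->
  X ^+ 2 + Y ^+ 2 <= D ^+ 2 -> dist p q <= D.
Proof.
move=> D0 e1 e2 h; rewrite /dist e1 e2.
have s1 : forall u v : R, (u - (u + v)) ^+ 2 = v ^+ 2.
  by move=> u v; rewrite opprD addrA subrr sub0r sqrrN.
rewrite !s1.
by rewrite -(ger0_norm D0) -sqrtr_sqr; apply: ler_wsqrtr.
Qed.
End One.
Section Low.
Variable R : realType.
Notation mu := (@lebesgue_measure R).
Lemma DI_low (vmax umax : R) (p q : pt R) : (0 < vmax)%R -> (0 < umax)%R ->
  ((dist p q / vmax)%:E <= DI_time vmax umax p q)%E.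
Proof.
move=> hv hu; apply/ereal_infP => _ [T [T0 [ux [uy [mux [muy [hub [hvb [e1 e2]]]]]]]] <-].
rewrite lee_fin ler_pdivrMr// mulrC.
have iu : forall f g : R -> R, measurable_fun setT f ->
    (forall t, (0 <= t <= T)%R -> (f t ^+ 2 + g t ^+ 2 <= umax ^+ 2)%R) ->
    mu.-integrable `[0, T] (EFin \o f).
  move=> f g mf hfg; apply: (intb (M := umax)); first exact: measurable_funS mf.
  move=> t /hfg h; apply: ab1; [exact: ltW|nra].
have ix := iu ux uy mux hub.
have iy : mu.-integrable `[0, T] (EFin \o uy).
  apply: (iu uy ux muy) => t /hub; by rewrite addrC.
apply: (dist_le (X := int0 T (fun t => int0 t ux)) (Y := int0 T (fun t => int0 t uy))).
- by rewrite mulr_ge0// ltW.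
- by rewrite e1.
- by rewrite e2.
apply: vec_bound => //; first exact: ltW.
- exact: mint0.
- exact: mint0.
Qed.

Lemma DD_low (wmax rho : R) (p : pt R) th (q : pt R) : (0 < wmax)%R -> (0 < rho)%R ->
  ((dist p q / wmax)%:E <= DD_time wmax rho p th q)%E.
Proof.
move=> hw hr; apply/ereal_infP => _ [T [T0 [wl [wr [mwl [mwr [hb /= [e1 e2]]]]]]] <-].
rewrite lee_fin ler_pdivrMr// mulrC.
set theta := fun t => th + int0 t (fun s => (wr s - wl s) / (2 * rho)).
have mrate : measurable_fun setT (fun s => (wr s - wl s) / (2 * rho)).
  by apply: measurable_funM; [exact: measurable_funB|exact: measurable_cst].
have irate : mu.-integrable `[0, T] (EFin \o (fun s => (wr s - wl s) / (2 * rho))).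
  apply: (intb (M := (wmax + wmax) / (2 * rho))); first exact: measurable_funS mrate.
  have i0 : 0 <= (2 * rho)^-1 by rewrite invr_ge0 mulr_ge0// ltW.
  move=> t /hb [hl hr']; rewrite normrM (ger0_norm i0) ler_wpM2r//.
  by rewrite (le_trans (ler_normB _ _))// lerD.
have mth : measurable_fun `[0, T] theta.
  apply: measurable_funD; first exact: measurable_cst.
  exact: mint0.
have msp : measurable_fun `[0, T] (fun t => (wl t + wr t) / 2).
  apply: measurable_funS (_ : measurable_fun setT _) => //.
  by apply: measurable_funM; [exact: measurable_funD|exact: measurable_cst].
have hcos : measurable_fun `[0, T] (fun t => cos (theta t)).
  exact: (measurableT_comp (continuous_measurable_fun (@continuous_cos R)) mth).
have hsin : measurable_fun `[0, T] (fun t => sin (theta t)).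
  exact: (measurableT_comp (continuous_measurable_fun (@continuous_sin R)) mth).
apply: (dist_le (X := int0 T (fun t => (wl t + wr t) / 2 * cos (theta t)))
                (Y := int0 T (fun t => (wl t + wr t) / 2 * sin (theta t)))).
- by rewrite mulr_ge0// ltW.
- by rewrite -e1.
- by rewrite -e2.
apply: vec_bound => //; first exact: ltW.
- exact: measurable_funM.
- exact: measurable_funM.
move=> t /hb [hl hr'].
set sp := (wl t + wr t) / 2.
rewrite !exprMn -mulrDr cos2Dsin2 mulr1.
move: hl hr'; rewrite !ler_norml => /andP[l1 l2] /andP[r1 r2].
have s1 : - wmax <= sp by rewrite /sp; lra.
have s2 : sp <= wmax by rewrite /sp; lra.
nra.
Qed.
End Low.
Section Up.
Variable R : realType.
Notation mu := (@lebesgue_measure R).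

Lemma int0_pw_ext (A B t1 T : R) f : 0 <= t1 <= T ->
  (forall t, 0 <= t <= T -> f t = if t <= t1 then A else B) ->
  int0 T f = A * t1 + B * (T - t1).
Proof.
move=> h fE; rewrite -int0_pw// !int0E; apply: eq_Rintegral => t.
by rewrite inE /= in_itv /= => /fE.
Qed.

Lemma sgn_norm (x : R) : (if 0 <= x then 1 else -1) * `|x| = x.
Proof. by case: ifP => h; [rewrite mul1r ger0_norm | rewrite mulN1r ltr0_norm ?opprK // ltNge h]. Qed.

Lemma DD_up (wmax rho : R) (p : pt R) th (q : pt R) : (0 < wmax)%R -> (0 < rho)%R ->
  (DD_time wmax rho p th q <= (dist p q / wmax + rho * pi / (2 * wmax))%:E)%E.
Proof.
move=> hw hr.
set dx := q.1 - p.1; set dy := q.2 - p.2.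
set d := dist p q.
have d0 : 0 <= d := sqrtr_ge0 _.
have dE : d ^+ 2 = dx ^+ 2 + dy ^+ 2.
  rewrite sqr_sqrtr ?addr_ge0 ?sqr_ge0// /dx /dy -!(sqrrN (q.1 - _)) -(sqrrN (q.2 - _)).
  by rewrite !opprB.
set ex := dx / d; set ey := dy / d.
set ux := cos th; set uy := sin th.
have u1 : ux ^+ 2 + uy ^+ 2 = 1 by exact: cos2Dsin2.
have e1 : ex ^+ 2 + ey ^+ 2 <= 1.
  rewrite /ex /ey; have [->|dpos] := eqVneq d 0.
    by rewrite !invr0 !mulr0 expr0n /= addr0.
  by rewrite !exprMn -mulrDl -dE exprVn divff ?expf_neq0.
set c := ux * ex + uy * ey.
set sg := if 0 <= c then 1 else -1 : R.
have sg2 : sg ^+ 2 = 1 by rewrite /sg; case: ifP => _; rewrite ?expr1n ?sqrrN ?expr1n.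
set ex' := sg * ex; set ey' := sg * ey.
set s' := ux * ey' - uy * ex'.
have s'1 : s' ^+ 2 <= 1.
  have : s' ^+ 2 <= (ux ^+ 2 + uy ^+ 2) * (ex' ^+ 2 + ey' ^+ 2).
    have L : s' ^+ 2 + (ux * ex' + uy * ey') ^+ 2 = (ux ^+ 2 + uy ^+ 2) * (ex' ^+ 2 + ey' ^+ 2).
      by rewrite /s'; ring.
    have := sqr_ge0 (ux * ex' + uy * ey'); lra.
  have E2 : ex' ^+ 2 + ey' ^+ 2 = sg ^+ 2 * (ex ^+ 2 + ey ^+ 2) by rewrite /ex' /ey'; ring.
  by move=> h; apply: le_trans h _; rewrite u1 mul1r E2 sg2 mul1r.
have s'b : -1 <= s' <= 1.
  by apply/andP; split; nra.
set D := asin s'.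
have Db : -(pi / 2) <= D <= pi / 2.
  by rewrite asin_geNpi2// asin_lepi2.
set g := if 0 <= D then 1 else -1 : R.
set t1 := `|D| * rho / wmax.
have t10 : 0 <= t1 by rewrite divr_ge0 ?mulr_ge0// ltW.
set T := t1 + d / wmax.
have t1T : 0 <= t1 <= T by rewrite t10 lerDl divr_ge0// ltW.
have g1 : `|g| = 1 by rewrite /g; case: ifP => _; rewrite ?normrN normr1.
have sg1 : `|sg| = 1 by rewrite /sg; case: ifP => _; rewrite ?normrN normr1.
have wn0 : wmax != 0 by rewrite gt_eqF.
have rn0 : rho != 0 by rewrite gt_eqF.
have sD : sin D = s' by rewrite /D asinK// in_itv /=.
have cc : ux * ex' + uy * ey' = sg * c by rewrite /ex' /ey' /c; ring.
have L : s' ^+ 2 + (ux * ex' + uy * ey') ^+ 2 = (ux ^+ 2 + uy ^+ 2) * (ex' ^+ 2 + ey' ^+ 2).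
  by rewrite /s'; ring.
have E2 : ex' ^+ 2 + ey' ^+ 2 = sg ^+ 2 * (ex ^+ 2 + ey ^+ 2) by rewrite /ex' /ey'; ring.
have final : forall K : R, (K = ux * cos D - uy * sin D -> p.1 + sg * d * K = q.1) /\
                           (K = uy * cos D + ux * sin D -> p.2 + sg * d * K = q.2).
  move=> K; have [d00|dpos] := eqVneq d 0.
    have : dx ^+ 2 + dy ^+ 2 = 0 by rewrite -dE d00 expr0n.
    move=> h0; have dx0 : dx = 0 by nra.
    have dy0 : dy = 0 by nra.
    split => _; rewrite d00 mulr0 mul0r addr0.
      by move: dx0; rewrite /dx => /eqP; rewrite subr_eq0 => /eqP.
    by move: dy0; rewrite /dy => /eqP; rewrite subr_eq0 => /eqP.
  have ee : ex ^+ 2 + ey ^+ 2 = 1.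
    by rewrite /ex /ey !exprMn -mulrDl -dE exprVn divff ?expf_neq0.
  have c0 : 0 <= sg * c.
    rewrite /sg; case: ifP => h; first by rewrite mul1r.
    by rewrite mulN1r oppr_ge0 ltW// ltNge h.
  have cD : cos D = sg * c.
    rewrite /D cos_asin//; apply/eqP; rewrite -(ger0_norm c0) -sqrtr_sqr; apply/eqP; congr Num.sqrt.
    by move: L; rewrite u1 mul1r E2 sg2 mul1r ee cc; lra.
  have dd : sg * d * ex' = dx.
    have -> : sg * d * ex' = sg ^+ 2 * (d * ex) by rewrite /ex'; ring.
    by rewrite sg2 mul1r /ex; field.
  have dd' : sg * d * ey' = dy.
    have -> : sg * d * ey' = sg ^+ 2 * (d * ey) by rewrite /ey'; ring.
    by rewrite sg2 mul1r /ey; field.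
  split => ->; rewrite cD sD -cc.
    have -> : ux * (ux * ex' + uy * ey') - uy * s' = ex' * (ux ^+ 2 + uy ^+ 2) by rewrite /s'; ring.
    by rewrite u1 mulr1 dd /dx addrC subrK.
  have -> : uy * (ux * ex' + uy * ey') + ux * s' = ey' * (ux ^+ 2 + uy ^+ 2) by rewrite /s'; ring.
  by rewrite u1 mulr1 dd' /dy addrC subrK.
have reach : DD_reach wmax rho p th q T.
  split; first by case/andP: t1T => /le_trans; apply.
  exists (fun s => if s <= t1 then - (g * wmax) else sg * wmax).
  exists (fun s => if s <= t1 then g * wmax else sg * wmax).
  split; first by apply: mpw; exact: measurable_cst.
  split; first by apply: mpw; exact: measurable_cst.
  split.
    move=> t _; split; case: ifP => _; rewrite ?normrN normrM ?g1 ?sg1 mul1r (ger0_norm (ltW hw))//.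
  rewrite /=.
  have thE : forall t, t1 <= t -> th + int0 t (fun s => ((if s <= t1 then g * wmax else sg * wmax) -
      (if s <= t1 then - (g * wmax) else sg * wmax)) / (2 * rho)) = th + D.
    move=> x1 tt; rewrite (@int0_pw_ext (g * wmax / rho) 0 t1 x1); last 2 first.
    - by rewrite t10 tt.
    - move=> s _; case: ifP => _; last by rewrite subrr mul0r.
      by rewrite opprK; field.
    rewrite mul0r addr0 /t1; congr (_ + _).
    rewrite -[RHS](sgn_norm D) -/g; field.
    by apply/andP; split.
  have posE : forall (K : R -> R), int0 T (fun t => ((if t <= t1 then - (g * wmax) else sg * wmax) +
      (if t <= t1 then g * wmax else sg * wmax)) / 2 * K (th + int0 t (fun s => ((if s <= t1 then g * wmax else sg * wmax) -
      (if s <= t1 then - (g * wmax) else sg * wmax)) / (2 * rho)))) = sg * d * K (th + D).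
    move=> K; rewrite (@int0_pw_ext 0 (sg * wmax * K (th + D)) t1 T)//; last first.
      move=> x2 _; case: ifP => h; first by rewrite addNr mul0r mul0r.
      rewrite thE; last by rewrite ltW// ltNge h.
      by congr (_ * _); field.
    have -> : T - t1 = d / wmax by rewrite /T addrAC subrr add0r.
    by rewrite mul0r add0r; field.
  split.
    by rewrite (posE cos); apply: (final _).1; rewrite cosD.
  by rewrite (posE sin); apply: (final _).2; rewrite sinD addrC.
apply: le_trans (ereal_inf_lbound _) _; first by exists T.
rewrite lee_fin /T addrC lerD2l /t1.
have aD : `|D| <= pi / 2 by rewrite ler_norml.
rewrite ler_pdivrMr// mulrC.
have -> : rho * pi / (2 * wmax) * wmax = rho * (pi / 2) by field.
by rewrite ler_wpM2l// ltW.
Qed.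

Lemma int_ramp (k tau T : R) : 0 < tau <= T ->
  int0 T (fun t => if t <= tau then k * t else k * tau) = k * tau ^+ 2 / 2 + k * tau * (T - tau).
Proof.
move=> /andP[t0 tT].
rewrite int0E (split_int (t1 := tau)); last first.
- apply: (intb (M := `|k| * T)).
    apply: measurable_funS (_ : measurable_fun setT _) => //.
    apply: mpw; last exact: measurable_cst.
    by apply: measurable_funM => //; exact: measurable_cst.
  move=> x /andP[x0 xT]; case: ifP => h; rewrite normrM ler_wpM2l//.
    by rewrite ger0_norm.
  by rewrite (ger0_norm (ltW t0)).
- by rewrite ltW.
have -> : \int[mu]_(s in `]tau, T]) (if s <= tau then k * s else k * tau) = \int[mu]_(s in `]tau, T]) (k * tau).
  by apply: eq_Rintegral => x; rewrite inE /= in_itv /= => /andP[x1 _]; rewrite leNgt x1.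
have -> : \int[mu]_(s in `[0, tau]) (if s <= tau then k * s else k * tau) = \int[mu]_(s in `[0, tau]) (k * s).
  by apply: eq_Rintegral => x; rewrite inE /= in_itv /= => /andP[_ ->].
by rewrite int_lin// Rint_oc.
Qed.

Lemma DI_up (vmax umax : R) (p q : pt R) : (0 < vmax)%R -> (0 < umax)%R ->
  (DI_time vmax umax p q <= (dist p q / vmax + vmax / (2 * umax))%:E)%E.
Proof.
move=> hv hu.
set dx := q.1 - p.1; set dy := q.2 - p.2.
set d := dist p q.
have d0 : 0 <= d := sqrtr_ge0 _.
have dE : d ^+ 2 = dx ^+ 2 + dy ^+ 2.
  rewrite sqr_sqrtr ?addr_ge0 ?sqr_ge0// /dx /dy -!(sqrrN (q.1 - _)) -(sqrrN (q.2 - _)).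
  by rewrite !opprB.
have [d00|dpos] := eqVneq d 0.
  have : dx ^+ 2 + dy ^+ 2 = 0 by rewrite -dE d00 expr0n.
  move=> h0; have dx0 : dx = 0 by nra.
  have dy0 : dy = 0 by nra.
  have reach : DI_reach vmax umax p q 0.
    split => //; exists (fun=> 0), (fun=> 0).
    have z : forall t, int0 t (fun=> 0 : R) = 0.
      move=> t; rewrite int0E.
      by rewrite Rintegral_cst ?mul0r//; exact: measurable_itv.
    split; first exact: measurable_cst.
    split; first exact: measurable_cst.
    split; first by move=> t _; rewrite expr0n /= addr0 sqr_ge0.
    split; first by move=> t _; rewrite !z expr0n /= addr0 sqr_ge0.
    have -> : (fun t => int0 t (fun=> 0 : R)) = fun=> 0 by apply: funext => t; exact: z.
    rewrite !z !addr0; split.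
      by move: dx0; rewrite /dx => /eqP; rewrite subr_eq0 => /eqP.
    by move: dy0; rewrite /dy => /eqP; rewrite subr_eq0 => /eqP.
  apply: le_trans (ereal_inf_lbound _) _; first by exists 0.
  by rewrite lee_fin addr_ge0// divr_ge0// ?mulr_ge0// ltW.
have dp : 0 < d by rewrite lt_neqAle eq_sym dpos d0.
set ex := dx / d; set ey := dy / d.
have ee : ex ^+ 2 + ey ^+ 2 = 1.
  by rewrite /ex /ey !exprMn -mulrDl -dE exprVn divff ?expf_neq0.
set tau := if vmax ^+ 2 / (2 * umax) <= d then vmax / umax else Num.sqrt (2 * d / umax).
set T := d / (umax * tau) + tau / 2.
have key : [/\ 0 < tau, umax * tau <= vmax, tau <= T & T <= d / vmax + vmax / (2 * umax)].
  rewrite /T /tau; case: ifP => h.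
    have vu : 0 < vmax / umax by rewrite divr_gt0.
    split => //.
    - by rewrite mulrC divfK// gt_eqF.
    - have -> : d / (umax * (vmax / umax)) = d / vmax by field; rewrite !gt_eqF.
      rewrite -subr_ge0.
      have -> : d / vmax + vmax / umax / 2 - vmax / umax = (d - vmax ^+ 2 / (2 * umax)) / vmax.
        by field; rewrite !gt_eqF.
      by rewrite divr_ge0 ?subr_ge0// ltW.
    - have -> : d / (umax * (vmax / umax)) = d / vmax by field; rewrite !gt_eqF.
      rewrite [X in _ + X <= _](_ : _ = vmax / (2 * umax))//.
      by field; rewrite gt_eqF.
  have hd : d < vmax ^+ 2 / (2 * umax) by rewrite ltNge h.
  set r := Num.sqrt (2 * d / umax).
  have r0 : 0 < r by rewrite sqrtr_gt0 divr_gt0 ?mulr_gt0.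
  have r2 : r ^+ 2 = 2 * d / umax by rewrite sqr_sqrtr// divr_ge0 ?mulr_ge0// ltW.
  have Tr : d / (umax * r) + r / 2 = r.
    have -> : d = umax * r ^+ 2 / 2 by rewrite r2; field; rewrite gt_eqF.
    by field; rewrite !gt_eqF.
  rewrite Tr; split => //.
  - have : (umax * r) ^+ 2 <= vmax ^+ 2.
      rewrite exprMn r2.
      have : 2 * d * umax <= vmax ^+ 2.
        move: (ltW hd); rewrite ler_pdivlMr ?mulr_gt0//.
        by rewrite (mulrC d) -mulrA (mulrC d) mulrA.
      move=> h2; have -> : umax ^+ 2 * (2 * d / umax) = 2 * d * umax.
        by field; rewrite gt_eqF.
      exact: h2.
    have ur0 : 0 < umax * r by rewrite mulr_gt0.
    by move=> h3; nra.
  - have : r ^+ 2 <= (d / vmax + vmax / (2 * umax)) ^+ 2.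
      rewrite r2.
      have amgm := sqr_ge0 (d / vmax - vmax / (2 * umax)).
      have -> : 2 * d / umax = 4 * (d / vmax) * (vmax / (2 * umax)).
        by field; rewrite !gt_eqF.
      by nra.
    have s0 : 0 < d / vmax + vmax / (2 * umax).
      by rewrite ltr_pwDr ?divr_gt0 ?mulr_gt0// divr_ge0 ?ltW.
    by move=> h3; nra.
case: key => tau0 utv tauT Tb.
have tT : 0 < tau <= T by rewrite tau0 tauT.
have reach : DI_reach vmax umax p q T.
  split; first by rewrite (le_trans (ltW tau0)).
  exists (fun s => if s <= tau then umax * ex else 0), (fun s => if s <= tau then umax * ey else 0).
  split; first by apply: mpw; exact: measurable_cst.
  split; first by apply: mpw; exact: measurable_cst.
  have V : forall e t, 0 <= t <= T -> int0 t (fun s => if s <= tau then umax * e else 0) =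
      if t <= tau then umax * e * t else umax * e * tau.
    move=> e t /andP[t0 tT']; case: ifP => h.
      by rewrite int0_pw_le ?t0.
    have tl : tau < t by rewrite ltNge h.
    by rewrite int0_pw ?mul0r ?addr0// (ltW tau0) (ltW tl).
  split.
    move=> t _; case: ifP => _; last by rewrite expr0n /= addr0 sqr_ge0.
    have -> : (umax * ex) ^+ 2 + (umax * ey) ^+ 2 = umax ^+ 2 * (ex ^+ 2 + ey ^+ 2) by ring.
    by rewrite ee mulr1.
  split.
    move=> t tt; rewrite !V//; case: ifP => h.
      have -> : (umax * ex * t) ^+ 2 + (umax * ey * t) ^+ 2 = (umax * t) ^+ 2 * (ex ^+ 2 + ey ^+ 2) by ring.
      rewrite ee mulr1.
      have : umax * t <= vmax by rewrite (le_trans _ utv)// ler_wpM2l// ltW.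
      case/andP: tt => t0 _ h2; have : 0 <= umax * t by rewrite mulr_ge0// ltW.
      by nra.
    have -> : (umax * ex * tau) ^+ 2 + (umax * ey * tau) ^+ 2 = (umax * tau) ^+ 2 * (ex ^+ 2 + ey ^+ 2) by ring.
    rewrite ee mulr1.
    have : 0 < umax * tau by rewrite mulr_gt0.
    by nra.
  have P : forall e, int0 T (fun t => int0 t (fun s => if s <= tau then umax * e else 0)) = e * d.
    move=> e.
    have -> : int0 T (fun t => int0 t (fun s => if s <= tau then umax * e else 0)) =
              int0 T (fun t => if t <= tau then umax * e * t else umax * e * tau).
      by rewrite !int0E; apply: eq_Rintegral => t; rewrite inE /= in_itv /= => /V ->.
    rewrite int_ramp// /T.
    by field; rewrite !gt_eqF.
  rewrite !P /ex /ey !divfK ?gt_eqF//.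
  by rewrite /dx /dy !(addrC p.1) !(addrC p.2) !subrK.
apply: le_trans (ereal_inf_lbound _) _; first by exists T.
by rewrite lee_fin.
Qed.
End Up.

Section NM.
Context d (T : measurableType d) (R : realType) (mu : {measure set T -> \bar R}).
Local Open Scope ereal_scope.
Lemma le_integral_nm (D : set T) (f g : T -> \bar R) :
  (forall x, D x -> 0 <= f x) -> (forall x, D x -> f x <= g x) ->
  \int[mu]_(x in D) f x <= \int[mu]_(x in D) g x.
Proof.
move=> f0 fg.
have g0 : forall x, D x -> 0 <= g x by move=> x Dx; exact: le_trans (f0 _ Dx) (fg _ Dx).
rewrite !ge0_integralE//.
apply: le_ereal_sup => _ [h /= hf <-]; exists h => //= x.
apply: (le_trans (hf x)); rewrite /patch; case: ifP => // /set_mem Dx; exact: fg.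
Qed.
End NM.

Section S.
Variable R : realType.
Lemma squareE (a b s : R) : square a b s = `[a, a + s]%classic `*` `[b, b + s]%classic.
Proof. by apply/seteqP; split => -[x y] /=; rewrite /square /= !in_itv. Qed.
Lemma square_measurable (a b s : R) : measurable (square a b s).
Proof. rewrite squareE; apply: measurableX; exact: measurable_itv. Qed.
Lemma square_leb2 (a b s : R) : 0 < s -> leb2 (square a b s) = (s ^+ 2)%:E.
Proof.
move=> s0.
rewrite squareE /leb2 product_measure1E; try exact: measurable_itv.
rewrite /leb /= (lebesgue_measure_itv `[a, a + s]) (lebesgue_measure_itv `[b, b + s]) /=.
rewrite !lte_fin !ltrDl s0 -!EFinD -EFinM.
by rewrite !(addrC _ (- _)) !addKr expr2.
Qed.
Lemma mdist (p : pt R) : measurable_fun setT (fun q : (R * R)%type => dist p q).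
Proof.
rewrite /dist.
have h := continuous_measurable_fun (@sqrt_continuous R).
have h2 : measurable_fun setT (fun q : (R * R)%type => ((p.1 - q.1) ^+ 2 + (p.2 - q.2) ^+ 2)).
  by apply: measurable_funD; apply: measurable_funX; apply: measurable_funB => //; exact: measurable_snd.
exact: (measurableT_comp h h2).
Qed.
Local Open Scope ereal_scope.
Definition Gm m (ps : 'I_m -> pt R) (q : pt R) : \bar R :=
  \big[Order.min/+oo%E]_(i < m) (dist (ps i) q)%:E.
Lemma mGm m (ps : 'I_m -> pt R) :
  measurable_fun setT (fun q : (measurableTypeR R * measurableTypeR R)%type => Gm ps q).
Proof.
rewrite /Gm; elim: (index_enum _) => [|i r IH].
  under eq_fun do rewrite big_nil; exact: measurable_cst.
under eq_fun do rewrite big_cons.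
apply: measurable_mine => //; apply/measurable_EFinP; exact: mdist.
Qed.
Lemma Gm_ge0 m (ps : 'I_m -> pt R) q : 0 <= Gm ps q.
Proof.
rewrite /Gm; elim/big_ind: _ => //.
- move=> x y x0 y0; rewrite /Order.min; case: ifP => //.
- move=> i _; rewrite lee_fin /dist; exact: sqrtr_ge0.
Qed.

Lemma outer (a b s : R) (hs : (0 < s)%R) (m : nat) (hm : (0 < m)%N)
  (pstar : 'I_m -> pt R) (hmed : is_median (square a b s) (s ^+ 2) pstar)
  (tau : 'I_m -> pt R -> \bar R) (c K : R) (hc : (0 < c)%R) (hK : (0 <= K)%R) :
  (forall i q, (dist (pstar i) q / c)%:E <= tau i q) ->
  (forall i q, tau i q <= (dist (pstar i) q / c + K)%:E) ->
  (Hstar m (square a b s) (s ^+ 2) * (c^-1)%:E <= MS_cost (square a b s) (s ^+ 2) pstar tau) /\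
  (MS_cost (square a b s) (s ^+ 2) pstar tau <= Hstar m (square a b s) (s ^+ 2) * (c^-1)%:E + K%:E).
Proof.
move=> tlow tup.
set Q := square a b s; set A := (s ^+ 2)%R.
have mQ : measurable Q := square_measurable a b s.
have HE : Hstar m Q A = Hm Q A pstar.
  apply/eqP; rewrite eq_le; apply/andP; split.
  - by apply: ereal_inf_lbound; exists pstar => //; exact: hmed.1.
  - by apply/ereal_infP => _ [ps Qps <-]; exact: hmed.2.
have HmE : Hm Q A pstar = (A^-1)%:E * \int[@leb2 R]_(q in Q) Gm pstar q by [].
have cinv0 : (0 <= c^-1)%R by rewrite invr_ge0 ltW.
have Ainv0 : (0 <= A^-1)%R by rewrite invr_ge0 exprn_ge0// ltW.
set F := fun q => \big[Order.min/+oo%E]_(i < m | closest pstar q i) tau i q.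
have MSE : MS_cost Q A pstar tau = (A^-1)%:E * \int[@leb2 R]_(q in Q) F q by [].
have Flow : forall q, Gm pstar q * (c^-1)%:E <= F q.
  move=> q; apply: le_bigmin; first exact: leey.
  move=> i _; apply: le_trans (tlow i q); rewrite EFinM lee_wpmul2r ?lee_fin//.
  exact: bigmin_le.
have Fup : forall q, F q <= Gm pstar q * (c^-1)%:E + K%:E.
  move=> q.
  have [i0 _ Gi0] := @eq_bigmin _ _ _ +oo%E (Ordinal hm) xpredT (fun i => (dist (pstar i) q)%:E) erefl (fun i _ => leey _).
  have ci0 : closest pstar q i0.
    apply/forallP => j; rewrite -lee_fin -Gi0; exact: bigmin_le.
  rewrite /Gm Gi0 -EFinM -EFinD.
  exact: le_trans (bigmin_le_cond _ _ ci0) (tup i0 q).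
have G0 := Gm_ge0 pstar.
have mG : measurable_fun Q (Gm pstar).
  exact: measurable_funS (mGm pstar).
split.
  rewrite HE HmE MSE -muleA lee_wpmul2l ?lee_fin//.
  rewrite -ge0_integralZr ?lee_fin//.
  apply: le_integral_nm => x _ //; apply: mule_ge0 => //; rewrite lee_fin//.
rewrite HE HmE MSE.
apply: le_trans (_ : (A^-1)%:E * \int[@leb2 R]_(q in Q) (Gm pstar q * (c^-1)%:E + K%:E) <= _).
  rewrite lee_wpmul2l ?lee_fin//; apply: le_integral_nm => x _ //.
  apply: le_trans (Flow x); apply: mule_ge0 => //; rewrite lee_fin//.
rewrite ge0_integralD//; first last.
- exact: (emeasurable_funM mG (measurable_cst _)).
- by move=> x _; apply: mule_ge0 => //; rewrite lee_fin.
have -> : \int[@leb2 R]_(_ in Q) K%:E = K%:E * (s^+2)%:E.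
  by rewrite (integral_cst (@leb2 R) mQ); congr (_ * _); exact: square_leb2.
rewrite ge0_integralZr ?lee_fin//.
rewrite ge0_muleDr; last 2 first.
- by apply: mule_ge0; [apply: integral_ge0 => x _| rewrite lee_fin].
- by rewrite -EFinM lee_fin mulr_ge0// exprn_ge0// ltW.
rewrite muleA; apply: leeD => //.
rewrite -!EFinM lee_fin /A mulrCA mulVf ?mulr1//.
by rewrite expf_neq0// gt_eqF.
Qed.

End S.

Theorem theorem2 (R : realType) (a b s : R) (hs : 0 < s)
    (m : nat) (hm : (0 < m)%N)
    (vmax umax wmax rho : R)
    (hv : 0 < vmax) (hu : 0 < umax) (hw : 0 < wmax) (hrho : 0 < rho)
    (pstar : 'I_m -> pt R) (hmed : is_median (square a b s) (s ^+ 2) pstar)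
    (theta : 'I_m -> R) :
  let Q := square a b s in
  let A := s ^+ 2 in
  let H := Hstar m Q A in
  let T_DI := MS_cost Q A pstar (fun i q => DI_time vmax umax (pstar i) q) in
  let T_DD := MS_cost Q A pstar (fun i q => DD_time wmax rho (pstar i) (theta i) q) in
  ((H * (vmax^-1)%:E <= T_DI)%E /\
   (T_DI <= H * (vmax^-1)%:E
            + (vmax / (2 * umax) + Num.sqrt (2 * Num.sqrt (2 * A) / umax))%:E)%E) /\
  ((H * (wmax^-1)%:E <= T_DD)%E /\
   (T_DD <= H * (wmax^-1)%:E + (rho * pi / (2 * wmax))%:E)%E).
Proof.
move=> Q A H T_DI T_DD; split.
  apply: (outer hs hm hmed hv).
  - by rewrite addr_ge0 ?sqrtr_ge0 ?divr_ge0 ?mulr_ge0 ?ltW.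
  - by move=> i q; exact: DI_low.
  - move=> i q; apply: (le_trans (DI_up _ _ hv hu)).
    by rewrite lee_fin addrA lerDl sqrtr_ge0.
apply: (outer hs hm hmed hw).
- by rewrite divr_ge0 ?mulr_ge0 ?pi_ge0 ?ltW ?mulr_gt0.
- by move=> i q; exact: DD_low.
- by move=> i q; exact: DD_up.
Qed.
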